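(* Let $\lambda>0$, $\gamma>0$, $\beta\ge 0$. Let $X$ be the Banach space of bounded analytic functions $h:[0,\lambda]\to\mathbb{R}$ with the supremum norm $\|h\|_\infty=\sup\{|h(x)|:0\le x\le\lambda\}$, and $K=\{h\in X: h\ge 0,\ \|h\|_\infty\le 1\}$. For $h\in K$ let $\Psi_h=1+\beta h$. Then for $h\in K$ the only solution $y$ of the linear problem \begin{align*} &[\Psi_h(\eta)y'(\eta)]'+2\eta y'(\eta)=0,\quad 0<\eta<\lambda,\\ &\Psi_h(0)y'(0)-\gamma y(0)=0,\\ &y(\lambda)=1, \end{align*} is given by $$y(\eta)=D_h\left(\frac1\gamma+\int_0^\eta\frac{\exp\left(-2\int_0^x\frac{\xi}{\Psi_h(\xi)}d\xi\right)}{\Psi_h(x)}\,dx\right),\quad 0<\eta<\lambda,$$ where $$D_h=\gamma\left(1+\gamma\int_0^\lambda\frac{\exp\left(-2\int_0^x\frac{\xi}{\Psi_h(\xi)}d\xi\right)}{\Psi_h(x)}\,dx\right)^{-1}.$$ Moreover, $y\in K$. *)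

(* Defs.v *)
From Stdlib Require Import Reals.
From Coquelicot Require Import Coquelicot.
Open Scope R_scope.

Definition analytic_on (a b : R) (h : R -> R) : Prop :=
  forall x0, a <= x0 <= b ->
    exists r, 0 < r /\ exists c : nat -> R,
      forall x, a <= x <= b -> Rabs (x - x0) < r ->
        is_series (fun n => c n * (x - x0) ^ n) (h x).

Definition inX (lam : R) (h : R -> R) : Prop :=
  analytic_on 0 lam h /\
  exists M, forall x, 0 <= x <= lam -> Rabs (h x) <= M.

Definition inK (lam : R) (h : R -> R) : Prop :=
  inX lam h /\
  (forall x, 0 <= x <= lam -> 0 <= h x) /\
  (forall x, 0 <= x <= lam -> Rabs (h x) <= 1).

Definition Psi (beta : R) (h : R -> R) (x : R) : R := 1 + beta * h x.

(* Classical solution of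
     [Psi y']' + 2 eta y' = 0 on (0,lam),
     Psi(0) y'(0) - gamma y(0) = 0,  y(lam) = 1.
   dy is the derivative of y on (0,lam); dy 0 is the (one-sided, right)
   derivative of y at 0; y is required to be left-continuous at lam so that
   the boundary condition y(lam) = 1 is meaningful. *)
Definition is_solution (lam gam beta : R) (h y : R -> R) : Prop :=
  exists dy : R -> R,
    (forall x, 0 < x < lam -> is_derive y x (dy x)) /\
    filterlim (fun t => (y t - y 0) / (t - 0)) (at_right 0) (locally (dy 0)) /\
    filterlim y (at_left lam) (locally (y lam)) /\
    (forall x, 0 < x < lam ->
       ex_derive (fun t => Psi beta h t * dy t) x /\
       Derive (fun t => Psi beta h t * dy t) x + 2 * x * dy x = 0) /\
    Psi beta h 0 * dy 0 - gam * y 0 = 0 /\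
    y lam = 1.

Definition kern (beta : R) (h : R -> R) (x : R) : R :=
  exp (-2 * RInt (fun xi => xi / Psi beta h xi) 0 x) / Psi beta h x.

Definition Dh (lam gam beta : R) (h : R -> R) : R :=
  gam * / (1 + gam * RInt (kern beta h) 0 lam).

Definition ysol (lam gam beta : R) (h : R -> R) (eta : R) : R :=
  Dh lam gam beta h * (1 / gam + RInt (kern beta h) 0 eta).

(* Main.v *)
Require Import Defs.
From Stdlib Require Import Reals.
From Coquelicot Require Import Coquelicot.
Open Scope R_scope.
From Stdlib Require Import Lra Lia.

Definition gbound (a : nat -> R) := exists M R0, 0 <= M /\ 0 < R0 /\ forall n, Rabs (a n) <= M * R0 ^ n.

Lemma pow2_ge_S n : INR (S n) <= 2 ^ n.
Proof.
  induction n. simpl; lra.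
  rewrite (S_INR (S n)). change (2 ^ S n) with (2 * 2 ^ n). assert (1 <= 2 ^ n) by (apply pow_R1_Rle; lra). lra.
Qed.

Lemma gbound_radius a M R0 : 0 < R0 -> (forall n, Rabs (a n) <= M * R0 ^ n) ->
  Rbar_le (Finite (/R0)) (CV_radius a).
Proof.
  intros HR H. destruct (CV_radius_bounded a) as [Hub _]. apply Hub.
  exists M. intro n. rewrite Rabs_mult, <- RPow_abs, (Rabs_pos_eq (/R0)) by (left; apply Rinv_0_lt_compat; lra).
  apply Rle_trans with (M * R0 ^ n * (/R0)^n).
  apply Rmult_le_compat_r. apply pow_le. left; apply Rinv_0_lt_compat; lra. apply H.
  rewrite Rmult_assoc, <- Rpow_mult_distr, Rinv_r by lra. rewrite pow1. lra.
Qed.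

Lemma gbound_inside a : gbound a -> exists rho, 0 < rho /\ forall y, Rabs y <= rho -> Rbar_lt (Rabs y) (CV_radius a).
Proof.
  intros [M [R0 [HM [HR H]]]]. exists (/(2*R0)). split. apply Rinv_0_lt_compat; lra.
  intros y Hy. apply Rbar_lt_le_trans with (Finite (/R0)).
  simpl. apply Rle_lt_trans with (1:=Hy). apply Rinv_lt_contravar; nra.
  eapply gbound_radius; eauto.
Qed.

Lemma gbound_mult a b : gbound a -> gbound b -> gbound (PS_mult a b).
Proof.
  intros [M [R0 [HM [HR H]]]] [M' [R1 [HM' [HR' H']]]].
  set (S := Rmax R0 R1).
  assert (HS0 : R0 <= S) by apply Rmax_l. assert (HS1 : R1 <= S) by apply Rmax_r.
  exists (M * M'), (2 * S). split. nra. split. lra.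
  intro n. unfold PS_mult.
  eapply Rle_trans. apply sum_f_R0_triangle.
  apply Rle_trans with (sum_f_R0 (fun _ => M * M' * S ^ n) n).
  apply sum_Rle. intros k Hk. rewrite Rabs_mult.
  apply Rle_trans with ((M * R0 ^ k) * (M' * R1 ^ (n - k))).
  apply Rmult_le_compat; auto using Rabs_pos.
  replace (M * M' * S ^ n) with ((M * S ^ k) * (M' * S ^ (n - k))).
  apply Rmult_le_compat. apply Rmult_le_pos; auto. apply pow_le; lra.
  apply Rmult_le_pos; auto. apply pow_le; lra.
  apply Rmult_le_compat_l; auto. apply pow_incr; lra.
  apply Rmult_le_compat_l; auto. apply pow_incr; lra.
  assert (E : S ^ n = S ^ k * S ^ (n - k)) by (rewrite <- pow_add; f_equal; lia). rewrite E; ring.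
  rewrite sum_cte. rewrite Rpow_mult_distr.
  assert (0 <= M * M' * S ^ n) by (apply Rmult_le_pos; [nra| apply pow_le; lra]).
  pose proof (pow2_ge_S n). nra.
Qed.

Fixpoint srec_aux (step : nat -> (nat -> R) -> R) (n : nat) : nat -> R :=
  match n with
  | O => fun _ => step O (fun _ => 0)
  | S k => let f := srec_aux step k in
           fun m => if Nat.leb m k then f m else step (S k) f
  end.
Definition srec step n := srec_aux step n n.

Lemma srec_aux_stable step k m : (m <= k)%nat -> srec_aux step k m = srec step m.
Proof.
  induction k; intros Hm.
  - assert (m = 0)%nat by lia. subst. reflexivity.
  - destruct (Nat.eq_dec m (S k)). subst. reflexivity.
    simpl. destruct (Nat.leb m k) eqn:E. apply IHk. apply Nat.leb_le; auto.
    apply Nat.leb_gt in E. lia.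
Qed.

Lemma srec_eq step : (forall n f g, (forall i, (i < n)%nat -> f i = g i) -> step n f = step n g) ->
  forall n, srec step n = step n (srec step).
Proof.
  intros Hs n. destruct n.
  - unfold srec; simpl. apply Hs. intros; lia.
  - unfold srec at 1. cbn [srec_aux].
    replace (Nat.leb (S n) n) with false by (symmetry; apply Nat.leb_gt; lia).
    apply Hs. intros i Hi. apply srec_aux_stable; lia.
Qed.

Lemma geom_le2 t m : 0 <= t <= /2 -> sum_f_R0 (fun j => t ^ j) m <= 2.
Proof.
  intros Ht. assert (H : forall m, 0 <= sum_f_R0 (fun j => t ^ j) m <= 2).
  { induction m0. simpl; lra.
    assert (E : sum_f_R0 (fun j => t ^ j) (S m0) = 1 + t * sum_f_R0 (fun j => t ^ j) m0).
    { rewrite decomp_sum by lia. simpl pred. rewrite scal_sum. simpl. f_equal. apply sum_eq. intros; ring. }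
    rewrite E. nra. }
  apply H.
Qed.

Lemma pow_split (t B0 R0 : R) i m : t * B0 = R0 -> (i <= m)%nat ->
  R0 ^ i * B0 ^ (m - i) = t ^ i * B0 ^ m.
Proof.
  intros E H. rewrite <- E, Rpow_mult_distr, Rmult_assoc, <- pow_add.
  f_equal. f_equal. lia.
Qed.

Lemma sum_scal_l (C : R) f m : sum_f_R0 (fun i => C * f i) m = C * sum_f_R0 f m.
Proof. induction m; simpl. ring. rewrite IHm. ring. Qed.

Definition rstep (p : nat -> R) n (f : nat -> R) :=
  match n with O => / p O | S m => - / p O * sum_f_R0 (fun i => p (S i) * f (m - i)%nat) m end.
Definition recip p := srec (rstep p).

Lemma recip_eq p n : recip p n = rstep p n (recip p).
Proof.
  apply srec_eq. intros [|m] f g H; simpl; auto.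
  f_equal. apply sum_eq. intros i Hi. rewrite H by lia. auto.
Qed.

Lemma recip_mult p : p O <> 0 -> forall n, PS_mult p (recip p) n = if Nat.eqb n 0 then 1 else 0.
Proof.
  intros Hp [|m]; unfold PS_mult.
  - simpl. rewrite recip_eq. simpl. field. auto.
  - rewrite decomp_sum by lia. simpl pred. rewrite (recip_eq p (S m - 0)). simpl.
    field. auto.
Qed.

Lemma recip_bound p M R0 : 0 < p O -> 0 <= M -> 0 < R0 -> (forall n, Rabs (p n) <= M * R0 ^ n) ->
  forall n, Rabs (recip p n) <= / p O * (2 * R0 * (1 + M / p O)) ^ n.
Proof.
  intros Hp HM HR H. set (B0 := 2 * R0 * (1 + M / p O)).
  assert (HMp : 0 <= M / p O) by (apply Rdiv_le_0_compat; lra).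
  assert (HB : 0 < B0) by (unfold B0; nra).
  set (t := R0 / B0).
  assert (Ht : t * B0 = R0) by (unfold t; field; lra).
  assert (Ht2 : 0 <= t <= /2).
  { split. unfold t; apply Rdiv_le_0_compat; lra.
    assert (2 * R0 <= B0) by (unfold B0; nra).
    apply Rmult_le_reg_r with B0. lra. rewrite Ht. lra. }
  intro n. induction n as [n IH] using (well_founded_induction Wf_nat.lt_wf).
  rewrite recip_eq. destruct n as [|m]; simpl rstep.
  - simpl. rewrite Rmult_1_r, Rabs_pos_eq. lra. left; apply Rinv_0_lt_compat; lra.
  - rewrite Rabs_mult, Rabs_Ropp, Rabs_pos_eq by (left; apply Rinv_0_lt_compat; lra).
    apply Rmult_le_compat_l. left; apply Rinv_0_lt_compat; lra.
    eapply Rle_trans. apply sum_f_R0_triangle.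
    apply Rle_trans with (sum_f_R0 (fun i => (M / p O * t * B0 ^ S m) * t ^ i) m).
    + apply sum_Rle. intros i Hi. rewrite Rabs_mult.
      apply Rle_trans with ((M * R0 ^ S i) * (/ p O * B0 ^ (m - i))).
      apply Rmult_le_compat; auto using Rabs_pos. apply IH. lia.
      replace ((M * R0 ^ S i) * (/ p O * B0 ^ (m - i))) with (M / p O * (R0 ^ S i * B0 ^ (m - i))) by (unfold Rdiv; ring).
      replace (m - i)%nat with (S m - S i)%nat by lia.
      rewrite (pow_split t B0 R0) by (auto; lia). simpl. unfold Rdiv. right; ring.
    + rewrite sum_scal_l.
      assert (0 <= M / p O * t * B0 ^ S m) by (apply Rmult_le_pos; [nra| apply pow_le; lra]).
      pose proof (geom_le2 t m Ht2).
      apply Rle_trans with (M / p O * t * B0 ^ S m * 2). apply Rmult_le_compat_l; auto.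
      assert (E : M / p O * t * 2 = (M / p O) / (1 + M / p O)) by (unfold t, B0; field; nra).
      assert (M / p O / (1 + M / p O) <= 1).
      { assert (0 < 1 + M / p O) by lra. apply (Rmult_le_reg_r (1 + M/p O)); auto.
        replace (M / p O / (1 + M / p O) * (1 + M / p O)) with (M / p O) by (field; lra). lra. }
      replace (M / p O * t * B0 ^ S m * 2) with ((M / p O * t * 2) * B0 ^ S m) by ring.
      rewrite E. rewrite <- (Rmult_1_l (B0 ^ S m)) at 2. apply Rmult_le_compat_r. apply pow_le; lra. auto.
Qed.

Definition ostep (a : nat -> R) (w0 : R) n (f : nat -> R) :=
  match n with O => w0 | S m => / INR (S m) * sum_f_R0 (fun j => a j * f (m - j)%nat) m end.
Definition osol a w0 := srec (ostep a w0).

Lemma osol_eq a w0 n : osol a w0 n = ostep a w0 n (osol a w0).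
Proof.
  apply srec_eq. intros [|m] f g H; simpl; auto.
  f_equal. apply sum_eq. intros i Hi. rewrite H by lia. auto.
Qed.

Lemma osol_deriv a w0 n : PS_derive (osol a w0) n = PS_mult a (osol a w0) n.
Proof.
  unfold PS_derive. rewrite osol_eq. unfold ostep. unfold PS_mult.
  rewrite <- Rmult_assoc, Rinv_r, Rmult_1_l. reflexivity. apply not_0_INR. lia.
Qed.

Lemma osol_bound a w0 M R0 : 0 <= M -> 0 < R0 -> (forall n, Rabs (a n) <= M * R0 ^ n) ->
  forall n, Rabs (osol a w0 n) <= Rabs w0 * (2 * R0 + 2 * M) ^ n.
Proof.
  intros HM HR H. set (B0 := 2 * R0 + 2 * M).
  assert (HB : 0 < B0) by (unfold B0; lra).
  set (t := R0 / B0).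
  assert (Ht : t * B0 = R0) by (unfold t; field; lra).
  assert (Ht2 : 0 <= t <= /2).
  { split. unfold t; apply Rdiv_le_0_compat; lra.
    assert (2 * R0 <= B0) by (unfold B0; nra).
    apply Rmult_le_reg_r with B0. lra. rewrite Ht. lra. }
  intro n. induction n as [n IH] using (well_founded_induction Wf_nat.lt_wf).
  rewrite osol_eq. destruct n as [|m]; unfold ostep.
  - simpl. lra.
  - assert (HS : 0 < INR (S m)) by (apply lt_0_INR; lia).
    rewrite Rabs_mult, (Rabs_pos_eq (/ INR (S m))) by (left; apply Rinv_0_lt_compat; lra).
    apply Rle_trans with (/ INR (S m) * (M * Rabs w0 * B0 ^ m * 2)).
    apply Rmult_le_compat_l. left; apply Rinv_0_lt_compat; lra.
    eapply Rle_trans. apply sum_f_R0_triangle.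
    apply Rle_trans with (sum_f_R0 (fun i => (M * Rabs w0 * B0 ^ m) * t ^ i) m).
    + apply sum_Rle. intros i Hi. rewrite Rabs_mult.
      apply Rle_trans with ((M * R0 ^ i) * (Rabs w0 * B0 ^ (m - i))).
      apply Rmult_le_compat; auto using Rabs_pos. apply IH. lia.
      replace ((M * R0 ^ i) * (Rabs w0 * B0 ^ (m - i))) with (M * Rabs w0 * (R0 ^ i * B0 ^ (m - i))) by ring.
      rewrite (pow_split t B0 R0) by (auto; lia). right; ring.
    + rewrite sum_scal_l.
      assert (0 <= M * Rabs w0 * B0 ^ m) by (apply Rmult_le_pos; [pose proof (Rabs_pos w0); nra| apply pow_le; lra]).
      apply Rmult_le_compat_l; auto. apply geom_le2; auto.
    + assert (HSm : 1 <= INR (S m)) by (apply (le_INR 1); lia).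
      assert (0 <= Rabs w0 * B0 ^ m) by (apply Rmult_le_pos; [apply Rabs_pos | apply pow_le; lra]).
      change (B0 ^ S m) with (B0 * B0 ^ m).
      apply Rmult_le_reg_l with (INR (S m)). lra.
      rewrite <- Rmult_assoc, Rinv_r, Rmult_1_l by lra.
      assert (2 * M <= B0) by (unfold B0; lra).
      set (X := Rabs w0 * B0 ^ m) in *.
      assert (2 * M * X <= B0 * X) by (apply Rmult_le_compat_r; auto).
      assert (B0 * X <= INR (S m) * (B0 * X)) by (rewrite <- (Rmult_1_l (B0 * X)) at 1; apply Rmult_le_compat_r; [nra|lra]).
      replace (M * Rabs w0 * B0 ^ m * 2) with (2 * M * X) by (unfold X; ring).
      replace (Rabs w0 * (B0 * B0 ^ m)) with (B0 * X) by (unfold X; ring). lra.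
Qed.

Lemma locally_R x (P : R -> Prop) : (exists d, 0 < d /\ forall y, Rabs (y - x) < d -> P y) -> locally x P.
Proof. intros [d [Hd H]]. exists (mkposreal d Hd). intros y Hy. apply H. exact Hy. Qed.
Lemma locally_R_inv x (P : R -> Prop) : locally x P -> exists d, 0 < d /\ forall y, Rabs (y - x) < d -> P y.
Proof. intros [d H]. exists d. split. apply cond_pos. intros y Hy. apply H. exact Hy. Qed.
Lemma at_right_R x (P : R -> Prop) : (exists d, 0 < d /\ forall y, x < y < x + d -> P y) -> at_right x P.
Proof. intros [d [Hd H]]. exists (mkposreal d Hd). intros y Hy Hxy. apply H.
  change (Rabs (y - x) < d) in Hy. apply Rabs_def2 in Hy. lra. Qed.
Lemma at_left_R x (P : R -> Prop) : (exists d, 0 < d /\ forall y, x - d < y < x -> P y) -> at_left x P.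
Proof. intros [d [Hd H]]. exists (mkposreal d Hd). intros y Hy Hxy. apply H.
  change (Rabs (y - x) < d) in Hy. apply Rabs_def2 in Hy. lra. Qed.
Goal forall x y : R, mult x y = x * y /\ plus x y = x + y /\ scal x y = x * y /\ minus x y = x - y /\ opp x = - x /\ zero = 0 /\ one = 1.
intros. repeat split; reflexivity. Qed.

Lemma lim_unique (F : (R -> Prop) -> Prop) {FF : ProperFilter F} (f : R -> R) l1 l2 :
  filterlim f F (locally l1) -> filterlim f F (locally l2) -> l1 = l2.
Proof.
  intros H1 H2. destruct (Req_dec l1 l2) as [E|NE]; auto. exfalso.
  assert (He : 0 < Rabs (l1 - l2) / 2) by (apply Rdiv_lt_0_compat; [apply Rabs_pos_lt; lra| lra]).
  set (e := mkposreal _ He).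
  apply filterlim_locally with (eps := e) in H1. apply filterlim_locally with (eps := e) in H2.
  destruct (Hierarchy.filter_ex _ (filter_and _ _ H1 H2)) as [x [B1 B2]].
  change (Rabs (f x - l1) < Rabs (l1 - l2) / 2) in B1.
  change (Rabs (f x - l2) < Rabs (l1 - l2) / 2) in B2.
  assert (Rabs (l1 - l2) <= Rabs (f x - l1) + Rabs (f x - l2)).
  { replace (l1 - l2) with (-(f x - l1) + (f x - l2)) by ring.
    eapply Rle_trans. apply Rabs_triang. rewrite Rabs_Ropp. lra. }
  lra.
Qed.

Lemma diffq (f : R -> R) l : is_derive f 0 l -> filterlim (fun t => (f t - f 0) / (t - 0)) (at_right 0) (locally l).
Proof.
  intros H. apply is_derive_Reals in H. apply filterlim_locally. intros eps.
  destruct (H eps (cond_pos eps)) as [delta Hd].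
  apply at_right_R. exists delta. split. apply cond_pos. intros y Hy.
  change (Rabs ((f y - f 0) / (y - 0) - l) < eps).
  specialize (Hd y). replace (0 + y) with y in Hd by ring. replace (y - 0) with y by ring.
  apply Hd. lra. rewrite Rabs_pos_eq; lra.
Qed.

Lemma left_lim (f : R -> R) x : continuous f x -> filterlim f (at_left x) (locally (f x)).
Proof. intros H. eapply filterlim_filter_le_1. apply filter_le_within. exact H. Qed.

Lemma const_MVT (phi : R -> R) lo hi :
  (forall x, lo < x < hi -> is_derive phi x 0) -> (forall x, lo <= x <= hi -> continuous phi x) ->
  forall x y, lo <= x <= hi -> lo <= y <= hi -> phi x = phi y.
Proof.
  intros Hd Hc x y Hx Hy.
  destruct (MVT_gen phi x y (fun _ => 0)) as [c [_ Hc']].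
  - intros z Hz. apply Hd. split.
    apply Rle_lt_trans with (Rmin x y). apply Rmin_glb; lra. apply Hz.
    apply Rlt_le_trans with (Rmax x y). apply Hz. apply Rmax_lub; lra.
  - intros z Hz. apply continuity_pt_filterlim. apply Hc. split.
    apply Rle_trans with (Rmin x y). apply Rmin_glb; lra. apply Hz.
    apply Rle_trans with (Rmax x y). apply Hz. apply Rmax_lub; lra.
  - lra.
Qed.

Lemma lim0_bounded (u : nat -> R) : is_lim_seq u 0 -> exists M, 0 <= M /\ forall n, Rabs (u n) <= M.
Proof.
  intros H. apply is_lim_seq_spec in H. destruct (H (mkposreal 1 Rlt_0_1)) as [N HN].
  set (SS := sum_f_R0 (fun k => Rabs (u k)) N).
  assert (HS : forall n, (n <= N)%nat -> Rabs (u n) <= SS).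
  { intros n Hn. unfold SS. clear HN. induction N.
    - assert (n = 0)%nat by lia. subst. simpl. lra.
    - destruct (Nat.eq_dec n (S N)). subst. simpl.
      assert (0 <= sum_f_R0 (fun k => Rabs (u k)) N) by (apply cond_pos_sum; intros; apply Rabs_pos). lra.
      simpl. pose proof (Rabs_pos (u (S N))). assert (Rabs (u n) <= sum_f_R0 (fun k => Rabs (u k)) N) by (apply IHN; lia). lra. }
  exists (1 + SS). split. pose proof (HS O (Nat.le_0_l _)). pose proof (Rabs_pos (u O)). lra.
  intro n. destruct (Compare_dec.le_lt_dec n N). pose proof (HS n l). lra.
  assert (Hn : (N <= n)%nat) by lia. specialize (HN n Hn). simpl in HN. rewrite Rminus_0_r in HN.
  pose proof (HS O (Nat.le_0_l _)). pose proof (Rabs_pos (u O)). lra.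
Qed.

Lemma is_pseries_e1 (k y : R) : is_pseries (fun n => if Nat.eqb n 0 then k else 0) y k.
Proof.
  apply is_pseries_R. apply is_series_decr_1. simpl.
  pose proof (is_pseries_0 (fun _ : nat => 0)) as H0.
  apply (is_series_ext _ _ _ (fun n => Rmult_0_r _)) in H0.
  match goal with |- is_series _ ?l => assert (El : l = 0) by (change (k + - (k * 1) = 0); ring); rewrite El end.
  eapply is_series_ext. 2: exact H0. intros; simpl; ring.
Qed.

Section S.
Variables (lam : R) (h : R -> R).
Hypothesis Hlam : 0 < lam.

Definition clamp x := Rmin lam (Rmax 0 x).
Lemma clamp_in x : 0 <= clamp x <= lam.
Proof. unfold clamp, Rmin, Rmax. repeat destruct Rle_dec; lra. Qed.
Lemma clamp_id x : 0 <= x <= lam -> clamp x = x.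
Proof. unfold clamp, Rmin, Rmax. repeat destruct Rle_dec; lra. Qed.
Lemma clamp_lip x y : Rabs (clamp x - clamp y) <= Rabs (x - y).
Proof. unfold clamp, Rmin, Rmax. unfold Rabs. repeat (destruct Rle_dec); repeat destruct Rcase_abs; lra. Qed.
Lemma clamp_cont x : continuous clamp x.
Proof.
  apply filterlim_locally. intros eps. apply locally_R. exists eps. split. apply cond_pos.
  intros y Hy. change (Rabs (clamp y - clamp x) < eps). eapply Rle_lt_trans. apply clamp_lip. auto.
Qed.

Lemma analytic_local : analytic_on 0 lam h -> forall x0, 0 <= x0 <= lam ->
  exists c d, 0 < d /\ gbound c /\
    forall x, 0 <= x <= lam -> Rabs (x - x0) <= d -> is_pseries c (x - x0) (h x).
Proof.
  intros Ha x0 Hx0. destruct (Ha x0 Hx0) as [r [Hr [c Hc]]].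
  set (d1 := Rmin r lam / 2).
  assert (Hd1 : 0 < d1) by (unfold d1; apply Rdiv_lt_0_compat; [apply Rmin_glb_lt|]; lra).
  assert (Hd1r : d1 < r) by (unfold d1; pose proof (Rmin_l r lam); lra).
  assert (Hd1l : d1 <= lam / 2) by (unfold d1; pose proof (Rmin_r r lam); lra).
  assert (Hx1 : exists x1, 0 <= x1 <= lam /\ Rabs (x1 - x0) = d1).
  { destruct (Rle_dec (x0 + d1) lam).
    exists (x0 + d1). split. lra. replace (x0 + d1 - x0) with d1 by ring. apply Rabs_pos_eq; lra.
    exists (x0 - d1). split. lra. replace (x0 - d1 - x0) with (- d1) by ring. rewrite Rabs_Ropp. apply Rabs_pos_eq; lra. }
  destruct Hx1 as [x1 [Hx1 Ex1]].
  assert (Hs := Hc x1 Hx1 ltac:(lra)).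
  destruct (lim0_bounded _ (ex_series_lim_0 _ (ex_intro _ _ Hs))) as [M [HM HMb]].
  exists c, (d1 / 2). split. lra. split.
  - exists M, (/ d1). split; auto. split. apply Rinv_0_lt_compat; auto.
    intro n. specialize (HMb n). rewrite Rabs_mult, <- RPow_abs, Ex1 in HMb.
    assert (0 < d1 ^ n) by (apply pow_lt; auto).
    rewrite pow_inv. apply Rmult_le_reg_r with (d1 ^ n). auto.
    rewrite Rmult_assoc, Rinv_l by lra. lra.
  - intros x Hx Hxd. apply is_pseries_R. apply Hc; auto. lra.
Qed.
End S.

Definition e1 (k : R) (n : nat) := if Nat.eqb n 0 then k else 0.

Lemma gbound_p (c : nat -> R) beta : 0 <= beta -> gbound c -> gbound (fun n => beta * c n + e1 1 n).
Proof.
  intros Hb [M [R0 [HM [HR H]]]]. exists (beta * M + 1), R0. split. nra. split. auto.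
  intros n. eapply Rle_trans. apply Rabs_triang. rewrite Rabs_mult, (Rabs_pos_eq beta) by auto.
  assert (beta * Rabs (c n) <= beta * (M * R0 ^ n)) by (apply Rmult_le_compat_l; auto).
  destruct n.
  - change (e1 1 0) with 1. rewrite Rabs_R1. simpl pow in *. lra.
  - change (e1 1 (S n)) with 0. rewrite Rabs_R0. assert (1 <= 1) by lra. assert (0 <= R0 ^ S n) by (apply pow_le; lra). nra.
Qed.

Lemma gbound_recip p : gbound p -> 0 < p O -> gbound (recip p).
Proof.
  intros [M [R0 [HM [HR H]]]] Hp. exists (/ p O), (2 * R0 * (1 + M / p O)).
  split. left; apply Rinv_0_lt_compat; auto. split.
  assert (0 <= M / p O) by (apply Rdiv_le_0_compat; lra). nra.
  apply recip_bound; auto.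
Qed.

Lemma gbound_osol a w0 : gbound a -> gbound (osol a w0).
Proof.
  intros [M [R0 [HM [HR H]]]]. exists (Rabs w0), (2 * R0 + 2 * M).
  split. apply Rabs_pos. split. lra. apply osol_bound; auto.
Qed.

Definition amk (K : R) (q : nat -> R) (n : nat) := -2 * (K * q n + match n with O => 0 | S m => q m end).

Lemma gbound_a K q : gbound q -> gbound (amk K q).
Proof.
  intros [M [R0 [HM [HR H]]]]. exists (2 * M * (Rabs K + / R0)), R0.
  assert (0 < / R0) by (apply Rinv_0_lt_compat; auto).
  split. pose proof (Rabs_pos K). nra. split. auto.
  intros n. unfold amk. rewrite Rabs_mult. replace (Rabs (-2)) with 2 by (rewrite Rabs_left; lra).
  assert (HK : Rabs (K * q n) <= Rabs K * (M * R0 ^ n)) by (rewrite Rabs_mult; apply Rmult_le_compat_l; auto using Rabs_pos).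
  assert (HS : Rabs (match n with O => 0 | S m => q m end) <= / R0 * (M * R0 ^ n)).
  { destruct n. rewrite Rabs_R0. apply Rmult_le_pos; [lra|]. apply Rmult_le_pos; auto. apply pow_le; lra.
    replace (/ R0 * (M * R0 ^ S n)) with (M * R0 ^ n). apply H. simpl. field. lra. }
  pose proof (Rabs_triang (K * q n) (match n with O => 0 | S m => q m end)).
  replace (2 * M * (Rabs K + / R0) * R0 ^ n) with (2 * (Rabs K * (M * R0 ^ n) + / R0 * (M * R0 ^ n))) by ring.
  lra.
Qed.

Definition fmk (F0 : R) (k : nat -> R) (n : nat) := match n with O => F0 | S m => k m / INR (S m) end.

Lemma gbound_f F0 k : gbound k -> gbound (fmk F0 k).
Proof.
  intros [M [R0 [HM [HR H]]]]. exists (Rabs F0 + M / R0), R0.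
  assert (0 <= M / R0) by (apply Rdiv_le_0_compat; lra).
  split. pose proof (Rabs_pos F0). lra. split. auto.
  intros [|n]; unfold fmk.
  - simpl. lra.
  - assert (HS : 1 <= INR (S n)) by (apply (le_INR 1); lia).
    unfold Rdiv. rewrite Rabs_mult, Rabs_inv, (Rabs_pos_eq (INR (S n))) by lra.
    apply Rle_trans with (Rabs (k n)).
    { rewrite <- (Rmult_1_r (Rabs (k n))) at 2. apply Rmult_le_compat_l. apply Rabs_pos.
      rewrite <- Rinv_1. apply Rinv_le_contravar; lra. }
    eapply Rle_trans. apply H. change (R0 ^ S n) with (R0 * R0 ^ n).
    pose proof (Rabs_pos F0). assert (0 <= R0 ^ n) by (apply pow_le; lra).
    replace ((Rabs F0 + M * / R0) * (R0 * R0 ^ n)) with (Rabs F0 * R0 * R0 ^ n + M * R0 ^ n) by (field; lra).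
    assert (0 <= Rabs F0 * R0 * R0 ^ n) by (apply Rmult_le_pos; [nra|auto]). lra.
Qed.

Lemma fmk_deriv F0 k n : PS_derive (fmk F0 k) n = k n.
Proof. unfold PS_derive, fmk. field. apply not_0_INR; lia. Qed.

Lemma ps_scal_R (k : R) (a : nat -> R) (y l : R) : is_pseries a y l -> is_pseries (PS_scal k a) y (k * l).
Proof. intros H. apply (@is_pseries_scal R_AbsRing R_NormedModule). apply Rmult_comm. exact H. Qed.
Lemma ps_plus_R (a b : nat -> R) (y la lb : R) : is_pseries a y la -> is_pseries b y lb -> is_pseries (PS_plus a b) y (la + lb).
Proof. intros H1 H2. apply (@is_pseries_plus R_AbsRing R_NormedModule); auto. Qed.
Lemma ps_incr_R (a : nat -> R) (y l : R) : is_pseries a y l -> is_pseries (PS_incr_1 a) y (y * l).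
Proof. intros H. apply (@is_pseries_incr_1 R_AbsRing R_NormedModule). exact H. Qed.

Lemma ps_correct a y : Rbar_lt (Rabs y) (CV_radius a) -> is_pseries a y (PSeries a y).
Proof. intros H. apply PSeries_correct. apply CV_radius_inside. auto. Qed.

Lemma ps_mult_val a b y : Rbar_lt (Rabs y) (CV_radius a) -> Rbar_lt (Rabs y) (CV_radius b) ->
  PSeries (PS_mult a b) y = PSeries a y * PSeries b y.
Proof.
  intros Ha Hb. apply is_pseries_unique. apply is_pseries_mult; auto using ps_correct.
Qed.

Lemma ps_e1_val k y : PSeries (e1 k) y = k.
Proof. apply is_pseries_unique. apply is_pseries_e1. Qed.

Lemma ps_p_val (c : nat -> R) beta y : Rbar_lt (Rabs y) (CV_radius c) ->
  is_pseries (fun n => beta * c n + e1 1 n) y (beta * PSeries c y + 1).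
Proof.
  intros Hc. apply (is_pseries_ext (PS_plus (PS_scal beta c) (e1 1))). intros; reflexivity.
  apply ps_plus_R. apply ps_scal_R. apply ps_correct; auto. apply is_pseries_e1.
Qed.

Lemma ps_a_val K q y : Rbar_lt (Rabs y) (CV_radius q) ->
  is_pseries (amk K q) y (-2 * (K * PSeries q y + y * PSeries q y)).
Proof.
  intros Hq. apply (is_pseries_ext (PS_scal (-2) (PS_plus (PS_scal K q) (PS_incr_1 q)))).
  intros [|n]; reflexivity.
  apply ps_scal_R. apply ps_plus_R. apply ps_scal_R. apply ps_correct; auto.
  apply ps_incr_R. apply ps_correct; auto.
Qed.

Lemma ps_y_val f D0 E0 y : Rbar_lt (Rabs y) (CV_radius f) ->
  is_pseries (fun n => D0 * f n + e1 E0 n) y (D0 * PSeries f y + E0).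
Proof.
  intros Hc. apply (is_pseries_ext (PS_plus (PS_scal D0 f) (e1 E0))). intros; reflexivity.
  apply ps_plus_R. apply ps_scal_R. apply ps_correct; auto. apply is_pseries_e1.
Qed.

Lemma ps_shift_deriv a x0 t : Rbar_lt (Rabs (t - x0)) (CV_radius a) ->
  is_derive (fun t => PSeries a (t - x0)) t (PSeries (PS_derive a) (t - x0)).
Proof.
  intros H. pose proof (is_derive_comp (PSeries a) (fun t => t - x0) t _ 1 (is_derive_PSeries a (t - x0) H)) as H2.
  replace (PSeries (PS_derive a) (t - x0)) with (scal 1 (PSeries (PS_derive a) (t - x0))).
  apply H2. auto_derive. auto. ring.
  change (1 * PSeries (PS_derive a) (t - x0) = PSeries (PS_derive a) (t - x0)). ring.
Qed.

Lemma c2p (f : R -> R) x : continuous f x -> continuity_pt f x.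
Proof. intros H. apply continuity_pt_filterlim. exact H. Qed.
Lemma p2c (f : R -> R) x : continuity_pt f x -> continuous f x.
Proof. intros H. apply continuity_pt_filterlim. exact H. Qed.

Lemma deriv_cont (f : R -> R) x l : is_derive f x l -> continuous f x.
Proof. intros H. apply (@ex_derive_continuous R_AbsRing R_NormedModule). exists l. exact H. Qed.

Lemma is_derive_mult_R (f g : R -> R) x df dg : is_derive f x df -> is_derive g x dg ->
  is_derive (fun t => f t * g t) x (df * g x + f x * dg).
Proof. intros H1 H2. apply (is_derive_mult f g x df dg H1 H2). intros; apply Rmult_comm. Qed.

Lemma const_open (phi : R -> R) lo hi : (forall x, lo < x < hi -> is_derive phi x 0) ->
  forall x y, lo < x < hi -> lo < y < hi -> phi x = phi y.
Proof.
  intros Hd x y Hx Hy. apply (const_MVT phi (Rmin x y) (Rmax x y)).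
  - intros z Hz. apply Hd. pose proof (Rmin_glb_lt x y lo). pose proof (Rmax_lub_lt x y hi). split.
    apply Rlt_trans with (Rmin x y). apply Rmin_glb_lt; lra. apply Hz.
    apply Rlt_trans with (Rmax x y). apply Hz. apply Rmax_lub_lt; lra.
  - intros z Hz. eapply deriv_cont. apply Hd. split.
    apply Rlt_le_trans with (Rmin x y). apply Rmin_glb_lt; lra. apply Hz.
    apply Rle_lt_trans with (Rmax x y). apply Hz. apply Rmax_lub_lt; lra.
  - split. apply Rmin_l. apply Rmax_l.
  - split. apply Rmin_r. apply Rmax_r.
Qed.

Section M.
Variables (lam gam beta : R) (h : R -> R).
Hypotheses (Hlam : 0 < lam) (Hgam : 0 < gam) (Hbeta : 0 <= beta) (Hh : inK lam h).

Definition hc x := h (clamp lam x).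
Definition Pc x := 1 + beta * hc x.
Definition gc x := x / Pc x.
Definition Ic x := RInt gc 0 x.
Definition wc x := exp (-2 * Ic x).
Definition kc x := wc x / Pc x.
Definition Fc x := RInt kc 0 x.

Lemma hc_nonneg x : 0 <= hc x.
Proof. destruct Hh as [_ [H _]]. apply H. apply clamp_in; lra. Qed.
Lemma Pc_ge1 x : 1 <= Pc x.
Proof. unfold Pc. pose proof (hc_nonneg x). nra. Qed.

Lemma hc_cont z : continuous hc z.
Proof.
  destruct Hh as [[Ha _] _].
  set (z' := clamp lam z). assert (Hz' : 0 <= z' <= lam) by (apply clamp_in; lra).
  destruct (analytic_local lam h Hlam Ha z' Hz') as [c [d [Hd [Hg Hc]]]].
  destruct (gbound_inside c Hg) as [rho [Hrho Hin]].
  apply (continuous_ext_loc _ (fun y => PSeries c (clamp lam y - z'))).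
  - apply locally_R. exists d. split; auto. intros y Hy.
    assert (H1 : 0 <= clamp lam y <= lam) by (apply clamp_in; lra).
    assert (H2 : Rabs (clamp lam y - z') <= d).
    { unfold z'. eapply Rle_trans. apply clamp_lip; lra. lra. }
    unfold hc. apply is_pseries_unique. apply Hc; auto.
  - apply (continuous_comp (fun y => clamp lam y - z') (PSeries c)).
    + apply (continuous_minus (fun y => clamp lam y) (fun _ => z')). apply (clamp_cont lam Hlam). apply continuous_const.
    + apply p2c. apply PSeries_continuity. apply Hin. unfold z'. rewrite Rminus_eq_0, Rabs_R0. lra.
Qed.

Lemma Pc_cont z : continuous Pc z.
Proof.
  unfold Pc. apply (continuous_plus (fun _ => 1) (fun x => beta * hc x)). apply continuous_const.
  apply (continuous_scal_r beta hc). apply hc_cont.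
Qed.

Lemma gc_cont z : continuous gc z.
Proof.
  apply p2c. unfold gc. apply (continuity_pt_div (fun x => x) Pc). apply continuity_pt_id.
  apply c2p, Pc_cont. pose proof (Pc_ge1 z). lra.
Qed.

Lemma Ic_deriv x : is_derive Ic x (gc x).
Proof.
  apply (is_derive_RInt _ _ 0). apply locally_R. exists 1. split. lra. intros y _.
  apply (@RInt_correct R_CompleteNormedModule). apply (@ex_RInt_continuous R_CompleteNormedModule). intros; apply gc_cont. apply gc_cont.
Qed.

Lemma Ic_cont x : continuous Ic x.
Proof. eapply deriv_cont. apply Ic_deriv. Qed.

Lemma wc_deriv x : is_derive wc x (wc x * (-2 * gc x)).
Proof.
  unfold wc. pose proof (is_derive_comp exp (fun x => -2 * Ic x) x (exp (-2 * Ic x)) (-2 * gc x)) as H.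
  assert (H2 := H (is_derive_exp _) (is_derive_scal _ _ _ _ (Ic_deriv x))).
  replace (exp (-2 * Ic x) * (-2 * gc x)) with (scal (-2 * gc x) (exp (-2 * Ic x))). exact H2.
  change (-2 * gc x * exp (-2 * Ic x) = exp (-2 * Ic x) * (-2 * gc x)). ring.
Qed.

Lemma wc_cont x : continuous wc x.
Proof. eapply deriv_cont. apply wc_deriv. Qed.

Lemma wc_pos x : 0 < wc x.
Proof. apply exp_pos. Qed.

Lemma kc_cont z : continuous kc z.
Proof.
  apply p2c. unfold kc. apply (continuity_pt_div wc Pc). apply c2p, wc_cont.
  apply c2p, Pc_cont. pose proof (Pc_ge1 z). lra.
Qed.

Lemma kc_pos x : 0 < kc x.
Proof. unfold kc. apply Rdiv_lt_0_compat. apply wc_pos. pose proof (Pc_ge1 x). lra. Qed.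

Lemma Fc_deriv x : is_derive Fc x (kc x).
Proof.
  apply (is_derive_RInt _ _ 0). apply locally_R. exists 1. split. lra. intros y _.
  apply (@RInt_correct R_CompleteNormedModule). apply (@ex_RInt_continuous R_CompleteNormedModule). intros; apply kc_cont. apply kc_cont.
Qed.

Lemma Fc_cont x : continuous Fc x.
Proof. eapply deriv_cont. apply Fc_deriv. Qed.

Lemma ex_RInt_kc a b : ex_RInt kc a b.
Proof. apply (@ex_RInt_continuous R_CompleteNormedModule). intros; apply kc_cont. Qed.

Lemma Fc_0 : Fc 0 = 0.
Proof. unfold Fc. rewrite RInt_point. reflexivity. Qed.
Lemma Ic_0 : Ic 0 = 0.
Proof. unfold Ic. rewrite RInt_point. reflexivity. Qed.
Lemma wc_0 : wc 0 = 1.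
Proof. unfold wc. rewrite Ic_0, Rmult_0_r. apply exp_0. Qed.

Lemma Fc_mono a b : a <= b -> Fc a <= Fc b.
Proof.
  intros Hab. assert (E : Fc b = Fc a + RInt kc a b).
  { unfold Fc. symmetry. apply (RInt_Chasles kc 0 a b); apply ex_RInt_kc. }
  rewrite E. assert (0 <= RInt kc a b). apply RInt_ge_0; auto. apply ex_RInt_kc.
  intros; left; apply kc_pos. lra.
Qed.

Lemma Psi_eq x : 0 <= x <= lam -> Psi beta h x = Pc x.
Proof. intros Hx. unfold Psi, Pc, hc. rewrite clamp_id; auto. Qed.

Lemma I_eq x : 0 <= x <= lam -> RInt (fun xi => xi / Psi beta h xi) 0 x = Ic x.
Proof.
  intros Hx. unfold Ic. apply RInt_ext. intros z Hz. unfold gc. rewrite Psi_eq. auto.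
  rewrite Rmin_left in Hz by lra. rewrite Rmax_right in Hz by lra. lra.
Qed.

Lemma kern_eq x : 0 <= x <= lam -> kern beta h x = kc x.
Proof. intros Hx. unfold kern, kc, wc. rewrite I_eq, Psi_eq; auto. Qed.

Lemma F_eq x : 0 <= x <= lam -> RInt (kern beta h) 0 x = Fc x.
Proof.
  intros Hx. unfold Fc. apply RInt_ext. intros z Hz. apply kern_eq.
  rewrite Rmin_left in Hz by lra. rewrite Rmax_right in Hz by lra. lra.
Qed.

Definition Dc := gam * / (1 + gam * Fc lam).
Definition yc x := Dc * (1 / gam + Fc x).

Lemma Dh_eq : Dh lam gam beta h = Dc.
Proof. unfold Dh, Dc. rewrite F_eq. auto. lra. Qed.

Lemma ysol_eq x : 0 <= x <= lam -> ysol lam gam beta h x = yc x.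
Proof. intros Hx. unfold ysol, yc. rewrite Dh_eq, F_eq; auto. Qed.


Lemma loc_in x : 0 < x < lam -> locally x (fun t => 0 < t < lam).
Proof.
  intros Hx. apply locally_R. exists (Rmin x (lam - x)). split. apply Rmin_glb_lt; lra.
  intros y Hy. apply Rabs_def2 in Hy. destruct Hy as [H1 H2].
  pose proof (Rmin_l x (lam - x)). pose proof (Rmin_r x (lam - x)). lra.
Qed.

Lemma Fc_lam_nonneg : 0 <= Fc lam.
Proof. rewrite <- Fc_0. apply Fc_mono. lra. Qed.

Lemma yc_deriv x : is_derive yc x (Dc * kc x).
Proof.
  unfold yc. replace (Dc * kc x) with (Dc * (0 + kc x)) by ring. apply is_derive_scal.
  apply (is_derive_plus (fun _ => 1 / gam) Fc). exact (@is_derive_const R_AbsRing R_NormedModule (1/gam) x). apply Fc_deriv.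
Qed.

Lemma yc_cont x : continuous yc x.
Proof. eapply deriv_cont. apply yc_deriv. Qed.

Lemma sol_exists : is_solution lam gam beta h (ysol lam gam beta h).
Proof.
  exists (fun t => Dc * kc t). split; [|split; [|split; [|split; [|split]]]].
  - intros x Hx. apply (is_derive_ext_loc yc). 
    + eapply filter_imp. 2: apply (loc_in x Hx). intros t Ht. symmetry. apply ysol_eq. lra.
    + apply yc_deriv.
  - apply (filterlim_ext_loc (fun t => (yc t - yc 0) / (t - 0))).
    + apply at_right_R. exists lam. split; auto. intros t Ht.
      rewrite !ysol_eq; auto; lra.
    + apply diffq. apply yc_deriv.
  - rewrite (ysol_eq lam) by lra. apply (filterlim_ext_loc yc).
    + apply at_left_R. exists lam. split; auto. intros t Ht. symmetry. apply ysol_eq. lra.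
    + apply left_lim. apply yc_cont.
  - intros x Hx.
    assert (HD : is_derive (fun t => Psi beta h t * (Dc * kc t)) x (Dc * (wc x * (-2 * gc x)))).
    { apply (is_derive_ext_loc (fun t => Dc * wc t)).
      - eapply filter_imp. 2: apply (loc_in x Hx). intros t Ht. rewrite Psi_eq by lra.
        assert (E : Pc t * (Dc * kc t) = Dc * wc t :> R) by (unfold kc; field; pose proof (Pc_ge1 t); lra). exact (eq_sym E).
      - apply is_derive_scal. apply wc_deriv. }
    split. eexists. exact HD. match goal with |- context [Derive ?f x] => replace (Derive f x) with (Dc * (wc x * (-2 * gc x))) by (symmetry; apply is_derive_unique; exact HD) end.
    unfold kc, gc. field. pose proof (Pc_ge1 x). lra.
  - rewrite Psi_eq, ysol_eq by lra. unfold yc, kc. rewrite Fc_0, wc_0. field.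
    pose proof (Pc_ge1 0). lra.
  - rewrite ysol_eq by lra. unfold yc, Dc. pose proof Fc_lam_nonneg. field. split; nra.
Qed.

Lemma ew_deriv x : is_derive (fun t => exp (2 * Ic t)) x (exp (2 * Ic x) * (2 * gc x)).
Proof.
  pose proof (is_derive_comp exp (fun x => 2 * Ic x) x (exp (2 * Ic x)) (2 * gc x)) as H.
  assert (H2 := H (is_derive_exp _) (is_derive_scal _ _ _ _ (Ic_deriv x))).
  replace (exp (2 * Ic x) * (2 * gc x)) with (scal (2 * gc x) (exp (2 * Ic x))). exact H2.
  change (2 * gc x * exp (2 * Ic x) = exp (2 * Ic x) * (2 * gc x)). ring.
Qed.

Lemma ew_wc x : exp (2 * Ic x) * wc x = 1.
Proof. unfold wc. rewrite <- exp_plus. replace (2 * Ic x + -2 * Ic x) with 0 by ring. apply exp_0. Qed.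

Lemma lin_deriv c0 C x : is_derive (fun t => c0 + C * Fc t) x (C * kc x).
Proof.
  replace (C * kc x) with (0 + C * kc x) by ring.
  apply (is_derive_plus (fun _ => c0) (fun t => C * Fc t)). exact (@is_derive_const R_AbsRing R_NormedModule c0 x).
  apply is_derive_scal. apply Fc_deriv.
Qed.

Lemma lin_cont c0 C x : continuous (fun t => c0 + C * Fc t) x.
Proof. eapply deriv_cont. apply lin_deriv. Qed.

Lemma sol_unique y : is_solution lam gam beta h y ->
  forall eta, 0 < eta < lam -> y eta = ysol lam gam beta h eta.
Proof.
  intros [dy [Hd [Hq [Hl [Hode [Hbc Hend]]]]]].
  set (u := fun t => Psi beta h t * dy t).
  assert (Hu : forall x, 0 < x < lam -> is_derive u x (-2 * x * dy x)).
  { intros x Hx. destruct (Hode x Hx) as [He HD].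
    replace (-2 * x * dy x) with (Derive (fun t => Psi beta h t * dy t) x) by lra.
    apply Derive_correct. exact He. }
  set (phi := fun t => u t * exp (2 * Ic t)).
  assert (Hphi : forall x, 0 < x < lam -> is_derive phi x 0).
  { intros x Hx. unfold phi. replace 0 with (-2 * x * dy x * exp (2 * Ic x) + u x * (exp (2 * Ic x) * (2 * gc x))).
    apply (is_derive_mult_R u (fun t => exp (2 * Ic t))). apply Hu; auto. apply ew_deriv.
    unfold u, gc. rewrite Psi_eq by lra. field. pose proof (Pc_ge1 x). lra. }
  set (C := phi (lam / 2)).
  assert (Hdy : forall x, 0 < x < lam -> dy x = C * kc x).
  { intros x Hx. assert (E : phi x = C) by (apply (const_open phi 0 lam Hphi); lra).
    rewrite <- E. unfold phi, u, kc. rewrite Psi_eq by lra.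
    pose proof (ew_wc x) as Ew. pose proof (Pc_ge1 x).
    replace (Pc x * dy x * exp (2 * Ic x) * (wc x / Pc x)) with (dy x * (exp (2 * Ic x) * wc x)) by (field; lra).
    rewrite Ew. ring. }
  set (psi := fun t => y t - C * Fc t).
  assert (Hpsi : forall x, 0 < x < lam -> is_derive psi x 0).
  { intros x Hx. unfold psi. replace 0 with (dy x - C * kc x) by (rewrite Hdy; auto; ring).
    apply (is_derive_minus y (fun t => C * Fc t)). apply Hd; auto. apply is_derive_scal. apply Fc_deriv. }
  set (c0 := psi (lam / 2)).
  assert (Hy : forall x, 0 < x < lam -> y x = c0 + C * Fc x).
  { intros x Hx. assert (E : psi x = c0) by (apply (const_open psi 0 lam Hpsi); lra).
    unfold psi in E. lra. }
  assert (Hy0 : y 0 = c0).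
  { assert (L1 : filterlim (fun t => t * ((y t - y 0) / (t - 0))) (at_right 0) (locally (0 * dy 0))).
    { eapply (filterlim_comp_2 (fun t => t) (fun t => (y t - y 0) / (t - 0)) (fun a b => a * b)).
      3: apply (@filterlim_mult R_AbsRing 0 (dy 0)).
      eapply filterlim_filter_le_1. apply filter_le_within. apply filterlim_id.
      exact Hq. }
    assert (L2 : filterlim (fun t => t * ((y t - y 0) / (t - 0))) (at_right 0) (locally (c0 + C * Fc 0 - y 0))).
    { apply (filterlim_ext_loc (fun t => (c0 + C * Fc t) - y 0)).
      - apply at_right_R. exists lam. split; auto. intros t Ht. rewrite (Hy t) by lra. field. lra.
      - eapply filterlim_filter_le_1. apply filter_le_within.
        apply (continuous_minus (fun t => c0 + C * Fc t) (fun _ => y 0)). apply lin_cont. apply continuous_const. }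
    pose proof (lim_unique _ _ _ _ L1 L2). rewrite Fc_0 in H. lra. }
  assert (Hdy0 : dy 0 = C * kc 0).
  { assert (L : filterlim (fun t => (y t - y 0) / (t - 0)) (at_right 0) (locally (C * kc 0))).
    { apply (filterlim_ext_loc (fun t => ((c0 + C * Fc t) - (c0 + C * Fc 0)) / (t - 0))).
      - apply at_right_R. exists lam. split; auto. intros t Ht. rewrite (Hy t) by lra. rewrite Hy0, Fc_0. f_equal. ring.
      - apply (diffq (fun t => c0 + C * Fc t)). apply lin_deriv. }
    exact (lim_unique _ _ _ _ Hq L). }
  assert (Hylam : y lam = c0 + C * Fc lam).
  { assert (L : filterlim y (at_left lam) (locally (c0 + C * Fc lam))).
    { apply (filterlim_ext_loc (fun t => c0 + C * Fc t)).
      - apply at_left_R. exists lam. split; auto. intros t Ht. rewrite (Hy t) by lra. auto.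
      - apply (left_lim (fun t => c0 + C * Fc t)). apply lin_cont. }
    exact (lim_unique _ _ _ _ Hl L). }
  rewrite Psi_eq in Hbc by lra. rewrite Hdy0, Hy0 in Hbc. unfold kc in Hbc. rewrite wc_0 in Hbc.
  assert (HC : C = gam * c0). { pose proof (Pc_ge1 0). field_simplify in Hbc. lra. lra. }
  intros eta Heta. rewrite Hy by auto. rewrite ysol_eq by lra. unfold yc, Dc.
  rewrite Hylam, HC in Hend. pose proof Fc_lam_nonneg.
  assert (Hpos : 0 < 1 + gam * Fc lam) by nra.
  assert (Hc0 : c0 = / (1 + gam * Fc lam)).
  { apply Rmult_eq_reg_r with (1 + gam * Fc lam). rewrite Rinv_l by lra. transitivity (c0 + gam * c0 * Fc lam); [ring | exact Hend]. lra. }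
  rewrite HC, Hc0. field. nra.
Qed.

Ltac minle := repeat first [apply Rle_refl | apply Rmin_l | eapply Rle_trans; [apply Rmin_r|] ].

Lemma ysol_analytic : analytic_on 0 lam (ysol lam gam beta h).
Proof.
  intros x0 Hx0.
  destruct Hh as [[Ha _] _].
  destruct (analytic_local lam h Hlam Ha x0 Hx0) as [c [d [Hd [Hgc Hc]]]].
  set (p := fun n => beta * c n + e1 1 n).
  assert (Hgp : gbound p) by (apply gbound_p; auto).
  assert (Hp0 : p O = Pc x0).
  { unfold p, Pc, hc. rewrite clamp_id by auto. change (e1 1 0) with 1.
    assert (E : h x0 = c O).
    { assert (H0 : Rabs (x0 - x0) <= d) by (rewrite Rminus_eq_0, Rabs_R0; lra).
      pose proof (Hc x0 Hx0 H0) as H. rewrite Rminus_eq_0 in H. apply is_pseries_unique in H.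
      rewrite PSeries_0 in H. auto. }
    rewrite E; ring. }
  assert (Hp0pos : 0 < p O) by (rewrite Hp0; pose proof (Pc_ge1 x0); lra).
  set (q := recip p). assert (Hgq : gbound q) by (apply gbound_recip; auto).
  set (a := amk x0 q). assert (Hga : gbound a) by (apply gbound_a; auto).
  set (W := osol a (wc x0)). assert (HgW : gbound W) by (apply gbound_osol; auto).
  set (k := PS_mult W q). assert (Hgk : gbound k) by (apply gbound_mult; auto).
  set (f := fmk (Fc x0) k). assert (Hgf : gbound f) by (apply gbound_f; auto).
  destruct (gbound_inside c Hgc) as [r1 [Hr1 R1]].
  destruct (gbound_inside p Hgp) as [r2 [Hr2 R2]].
  destruct (gbound_inside q Hgq) as [r3 [Hr3 R3]].
  destruct (gbound_inside a Hga) as [r4 [Hr4 R4]].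
  destruct (gbound_inside W HgW) as [r5 [Hr5 R5]].
  destruct (gbound_inside k Hgk) as [r6 [Hr6 R6]].
  destruct (gbound_inside f Hgf) as [r7 [Hr7 R7]].
  set (rho := Rmin d (Rmin r1 (Rmin r2 (Rmin r3 (Rmin r4 (Rmin r5 (Rmin r6 r7))))))).
  assert (Hrho : 0 < rho) by (unfold rho; repeat apply Rmin_glb_lt; auto).
  assert (Rd : rho <= d) by (unfold rho; minle).
  assert (C1 : forall y, Rabs y <= rho -> Rbar_lt (Rabs y) (CV_radius c)) by (intros y Hy; apply R1; eapply Rle_trans; [exact Hy| unfold rho; minle]).
  assert (C2 : forall y, Rabs y <= rho -> Rbar_lt (Rabs y) (CV_radius p)) by (intros y Hy; apply R2; eapply Rle_trans; [exact Hy| unfold rho; minle]).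
  assert (C3 : forall y, Rabs y <= rho -> Rbar_lt (Rabs y) (CV_radius q)) by (intros y Hy; apply R3; eapply Rle_trans; [exact Hy| unfold rho; minle]).
  assert (C4 : forall y, Rabs y <= rho -> Rbar_lt (Rabs y) (CV_radius a)) by (intros y Hy; apply R4; eapply Rle_trans; [exact Hy| unfold rho; minle]).
  assert (C5 : forall y, Rabs y <= rho -> Rbar_lt (Rabs y) (CV_radius W)) by (intros y Hy; apply R5; eapply Rle_trans; [exact Hy| unfold rho; minle]).
  assert (C6 : forall y, Rabs y <= rho -> Rbar_lt (Rabs y) (CV_radius k)) by (intros y Hy; apply R6; eapply Rle_trans; [exact Hy| unfold rho; minle]).
  assert (C7 : forall y, Rabs y <= rho -> Rbar_lt (Rabs y) (CV_radius f)) by (intros y Hy; apply R7; eapply Rle_trans; [exact Hy| unfold rho; minle]).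
  set (lo := Rmax 0 (x0 - rho)). set (hi := Rmin lam (x0 + rho)).
  assert (Hdom : forall x, lo <= x <= hi -> 0 <= x <= lam /\ Rabs (x - x0) <= rho).
  { intros x [H1 H2]. unfold lo, hi in *. pose proof (Rmax_l 0 (x0 - rho)). pose proof (Rmax_r 0 (x0 - rho)).
    pose proof (Rmin_l lam (x0 + rho)). pose proof (Rmin_r lam (x0 + rho)).
    split. lra. apply Rabs_le. lra. }
  assert (Hdom' : forall x, 0 <= x <= lam -> Rabs (x - x0) <= rho -> lo <= x <= hi).
  { intros x Hx Hr. assert (- rho <= x - x0 <= rho) by (unfold Rabs in Hr; destruct (Rcase_abs (x - x0)); lra). unfold lo, hi. split. apply Rmax_lub; lra. apply Rmin_glb; lra. }
  assert (Hx0d : lo <= x0 <= hi) by (apply Hdom'; auto; rewrite Rminus_eq_0, Rabs_R0; lra).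
  assert (Hint : forall x, lo < x < hi -> lo <= x <= hi) by (intros; lra).
  assert (HP : forall x, lo <= x <= hi -> PSeries p (x - x0) = Pc x).
  { intros x Hx. destruct (Hdom x Hx) as [Hx1 Hx2].
    unfold Pc, hc, p. rewrite clamp_id by auto.
    rewrite (is_pseries_unique _ _ _ (ps_p_val c beta (x - x0) (C1 _ Hx2))).
    rewrite (is_pseries_unique _ _ _ (Hc x Hx1 ltac:(lra))). ring. }
  assert (HQ : forall x, lo <= x <= hi -> PSeries q (x - x0) = / Pc x).
  { intros x Hx. destruct (Hdom x Hx) as [Hx1 Hx2].
    assert (E : PSeries (PS_mult p q) (x - x0) = 1).
    { rewrite <- (ps_e1_val 1 (x - x0)). apply PSeries_ext. intro n. unfold q. rewrite recip_mult by lra.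
      unfold e1. reflexivity. }
    rewrite ps_mult_val in E by auto. rewrite HP in E by auto.
    pose proof (Pc_ge1 x). apply Rmult_eq_reg_l with (Pc x). rewrite E. field. lra. lra. }
  assert (HA : forall y, Rabs y <= rho -> PSeries a y = -2 * (x0 * PSeries q y + y * PSeries q y)).
  { intros y Hy. apply is_pseries_unique. apply ps_a_val. auto. }
  assert (HW' : forall y, Rabs y <= rho -> PSeries (PS_derive W) y = PSeries a y * PSeries W y).
  { intros y Hy. rewrite <- ps_mult_val by auto. apply PSeries_ext. intro n. apply osol_deriv. }
  assert (HWid : forall x, lo <= x <= hi -> PSeries W (x - x0) = wc x).
  { set (phi := fun t => PSeries W (t - x0) * exp (2 * Ic t)).
    assert (Hpd : forall t, lo <= t <= hi -> is_derive phi t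
        (PSeries (PS_derive W) (t - x0) * exp (2 * Ic t) + PSeries W (t - x0) * (exp (2 * Ic t) * (2 * gc t)))).
    { intros t Ht. destruct (Hdom t Ht) as [Ht1 Ht2].
      apply (is_derive_mult_R (fun t => PSeries W (t - x0)) (fun t => exp (2 * Ic t))).
      apply ps_shift_deriv. auto. apply ew_deriv. }
    assert (Hphi : forall t, lo < t < hi -> is_derive phi t 0).
    { intros t Ht. destruct (Hdom t (Hint t Ht)) as [Ht1 Ht2].
      pose proof (Hpd t (Hint t Ht)) as D. 
      rewrite HW', HA, HQ in D by auto. unfold gc in D.
      replace (-2 * (x0 * / Pc t + (t - x0) * / Pc t) * PSeries W (t - x0) * exp (2 * Ic t) +
        PSeries W (t - x0) * (exp (2 * Ic t) * (2 * (t / Pc t)))) with 0 in D. exact D.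
      field. pose proof (Pc_ge1 t). lra. }
    assert (Hpc : forall t, lo <= t <= hi -> continuous phi t).
    { intros t Ht. eapply deriv_cont. apply Hpd. auto. }
    assert (Hp1 : phi x0 = 1).
    { unfold phi. rewrite Rminus_eq_0, PSeries_0. unfold W. rewrite osol_eq. simpl.
      rewrite Rmult_comm. apply ew_wc. }
    intros x Hx. assert (E : phi x = 1) by (rewrite <- Hp1; apply (const_MVT phi lo hi); auto).
    unfold phi in E. pose proof (ew_wc x) as E2.
    transitivity (PSeries W (x - x0) * (exp (2 * Ic x) * wc x)). rewrite E2; ring.
    rewrite <- Rmult_assoc, E. ring. }
  assert (HK : forall x, lo <= x <= hi -> PSeries k (x - x0) = kc x).
  { intros x Hx. destruct (Hdom x Hx) as [Hx1 Hx2]. unfold k. rewrite ps_mult_val by auto.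
    rewrite HWid, HQ by auto. unfold kc. field. pose proof (Pc_ge1 x). lra. }
  assert (HF : forall x, lo <= x <= hi -> PSeries f (x - x0) = Fc x).
  { set (chi := fun t => PSeries f (t - x0) - Fc t).
    assert (Hcd : forall t, lo <= t <= hi -> is_derive chi t (PSeries (PS_derive f) (t - x0) - kc t)).
    { intros t Ht. destruct (Hdom t Ht) as [Ht1 Ht2].
      apply (is_derive_minus (fun t => PSeries f (t - x0)) Fc). apply ps_shift_deriv; auto. apply Fc_deriv. }
    assert (Hchi : forall t, lo < t < hi -> is_derive chi t 0).
    { intros t Ht. pose proof (Hcd t (Hint t Ht)) as D.
      replace (PSeries (PS_derive f) (t - x0) - kc t) with 0 in D. exact D.
      rewrite <- (HK t (Hint t Ht)). rewrite (PSeries_ext (PS_derive f) k). ring. intro n. apply fmk_deriv. }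
    assert (Hcc : forall t, lo <= t <= hi -> continuous chi t).
    { intros t Ht. eapply deriv_cont. apply Hcd. auto. }
    assert (Hc0 : chi x0 = 0).
    { unfold chi. rewrite Rminus_eq_0, PSeries_0. unfold f, fmk. ring. }
    intros x Hx. assert (E : chi x = 0) by (rewrite <- Hc0; apply (const_MVT chi lo hi); auto).
    unfold chi in E. lra. }
  exists rho. split. auto.
  exists (fun n => Dc * f n + e1 (Dc / gam) n). intros x Hx Hxr.
  assert (Hxd : lo <= x <= hi) by (apply Hdom'; auto; lra).
  apply is_pseries_R. rewrite ysol_eq by auto.
  replace (yc x) with (Dc * PSeries f (x - x0) + Dc / gam) by (unfold yc; rewrite HF by auto; field; lra).
  apply ps_y_val. apply C7. lra.
Qed.

Lemma Dc_pos : 0 < Dc.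
Proof. unfold Dc. pose proof Fc_lam_nonneg. apply Rmult_lt_0_compat; auto. apply Rinv_0_lt_compat. nra. Qed.

Lemma yc_lam : yc lam = 1.
Proof. unfold yc, Dc. pose proof Fc_lam_nonneg. field. split; nra. Qed.

Lemma ysol_inK : inK lam (ysol lam gam beta h).
Proof.
  assert (B : forall x, 0 <= x <= lam -> 0 <= ysol lam gam beta h x <= 1).
  { intros x Hx. rewrite ysol_eq by auto. pose proof Dc_pos.
    assert (0 <= Fc x) by (rewrite <- Fc_0; apply Fc_mono; lra).
    assert (Fc x <= Fc lam) by (apply Fc_mono; lra).
    rewrite <- yc_lam. unfold yc. split.
    apply Rmult_le_pos. lra. assert (0 < 1 / gam) by (apply Rdiv_lt_0_compat; lra). lra.
    apply Rmult_le_compat_l; lra. }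
  split; [split|split].
  - apply ysol_analytic.
  - exists 1. intros x Hx. rewrite Rabs_pos_eq; apply B; auto.
  - intros x Hx. apply B; auto.
  - intros x Hx. rewrite Rabs_pos_eq; apply B; auto.
Qed.

Lemma main_res :
  is_solution lam gam beta h (ysol lam gam beta h) /\
  (forall y, is_solution lam gam beta h y ->
     forall eta, 0 < eta < lam -> y eta = ysol lam gam beta h eta) /\
  inK lam (ysol lam gam beta h).
Proof. split. apply sol_exists. split. apply sol_unique. apply ysol_inK. Qed.

End M.

Theorem lemma3p1 (lam gam beta : R) (h : R -> R)
  (Hlam : 0 < lam) (Hgam : 0 < gam) (Hbeta : 0 <= beta) (Hh : inK lam h) :
  is_solution lam gam beta h (ysol lam gam beta h) /\
  (forall y, is_solution lam gam beta h y ->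
     forall eta, 0 < eta < lam -> y eta = ysol lam gam beta h eta) /\
  inK lam (ysol lam gam beta h).
Proof. eapply main_res; eauto. Qed.
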